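(* Let $\mathbf C$ be a clone $\tau$-algebra. Then: (i) $\mathrm{Fi}\,\mathbf C$ is a subalgebra of $\mathbf C$; (ii) for each $k$, $\mathrm{Fi}_k\,\mathbf C$ is a subuniverse of the $\tau$-reduct $\mathbf C_\tau$, closed under all operations $q_n$ ($n\ge0$), and containing $\mathsf e_1,\dots,\mathsf e_k$; (iii) if $a\in\mathrm{Fi}_0\,\mathbf C$ and $b_1,\dots,b_n\in C$, then $q_n(a,b_1,\dots,b_n)=a$; (iv) if $a\in\mathrm{Fi}\,\mathbf C$, $n\ge\gamma(a)$ and $b_1,\dots,b_n\in\mathrm{Fi}_0\,\mathbf C$, then $q_n(a,b_1,\dots,b_n)\in\mathrm{Fi}_0\,\mathbf C$.
   Context: A clone $\tau$-algebra is an algebra $\mathbf C=(C,\sigma^{\mathbf C}\ (\sigma\in\tau),q_n^{\mathbf C}\ (n\ge0),\mathsf e_i^{\mathbf C}\ (i\ge1))$ with $\mathsf e_i$ nullary, $q_n$ of arity $n+1$, satisfying: (C1) $q_n(\mathsf e_i,x_1,\dots,x_n)=x_i$ ($1\le i\le n$); (C2) $q_n(\mathsf e_j,x_1,\dots,x_n)=\mathsf e_j$ ($j>n$); (C3) $q_n(x,\mathsf e_1,\dots,\mathsf e_n)=x$; (C4) $q_k(x,y_1,\dots,y_k)=q_n(x,y_1,\dots,y_k,\mathsf e_{k+1},\dots,\mathsf e_n)$ ($n>k$); (C5) $q_n(q_n(x,\mathbf y),\mathbf z)=q_n(x,q_n(y_1,\mathbf z),\dots,q_n(y_n,\mathbf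 z))$; (C6) $q_n(\sigma(x_1,\dots,x_k),\mathbf y)=\sigma(q_n(x_1,\mathbf y),\dots,q_n(x_k,\mathbf y))$ for $\sigma\in\tau$ of arity $k$. An element $a$ is independent of $\mathsf e_n$ if $q_n(a,\mathsf e_1,\dots,\mathsf e_{n-1},\mathsf e_{n+1})=a$, dependent otherwise; $\gamma(a)$ is $\omega$ if $a$ depends on infinitely many $\mathsf e_i$, $0$ if on none, otherwise the largest $i$ with $a$ dependent on $\mathsf e_i$. $\mathrm{Fi}_k\,\mathbf C=\{a\in C:\gamma(a)\le k\}$ and $\mathrm{Fi}\,\mathbf C=\bigcup_{k<\omega}\mathrm{Fi}_k\,\mathbf C$. *)

(* Defs.v *)
From mathcomp Require Import all_boot.
Set Implicit Arguments. Unset Strict Implicit. Unset Printing Implicit Defensive.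

(* A clone tau-algebra on carrier [C] consists of
     sig s : ('I_(ar s) -> C) -> C             (the operation sigma^C, arity ar s)
     q n   : C -> ('I_n -> C) -> C             (q_n, arity n+1; the 'I_n-argument
                                               lists y_1,...,y_n, y_{i+1} at index i)
     e     : nat -> C                          (e i = the constant e_i, meaningful for i >= 1;
                                               e 0 is an unused junk value) *)

Section CloneAlg.
Variables (tau : Type) (ar : tau -> nat) (C : Type).
Variable sig : forall s : tau, ('I_(ar s) -> C) -> C.
Variable q : forall n : nat, C -> ('I_n -> C) -> C.
Variable e : nat -> C.

(* q_n with a 1-indexed argument list y : nat -> C, i.e. q_n(x, y 1, ..., y n). *)
Definition qn (n : nat) (x : C) (y : nat -> C) : C :=
  @q n x (fun i : 'I_n => y i.+1).

Definition is_clone_alg : Prop :=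
  (forall n i (x : nat -> C), 1 <= i <= n -> qn n (e i) x = x i) /\
  (forall n j (x : nat -> C), n < j -> qn n (e j) x = e j) /\
  (forall n x, qn n x e = x) /\
  (forall k n x (y : nat -> C), k < n ->
                qn k x y = qn n x (fun i => if i <= k then y i else e i)) /\
  (forall n x (y z : nat -> C),
                qn n (qn n x y) z = qn n x (fun i => qn n (y i) z)) /\
  (forall n (s : tau) (x : 'I_(ar s) -> C) (y : nat -> C),
                qn n (sig x) y = sig (fun j => qn n (x j) y)).

(* a is independent of e_n (n >= 1): q_n(a, e_1, ..., e_{n-1}, e_{n+1}) = a. *)
Definition independent (a : C) (n : nat) : Prop :=
  @q n a (fun i : 'I_n => if i.+1 < n then e i.+1 else e n.+1) = a.

Definition dependent (a : C) (n : nat) : Prop := ~ independent a n.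

(* gamma(a) <= k  (k a natural number), written out: a is dependent on no e_n
   with n > k.  (If gamma(a) = omega, a depends on some e_n with n > k;
   if gamma(a) is finite it is the largest dependent index.) *)
Definition gamma_le (a : C) (k : nat) : Prop :=
  forall n, k < n -> ~ dependent a n.

Definition Fi_k (k : nat) (a : C) : Prop := gamma_le a k.
Definition Fi (a : C) : Prop := exists k, Fi_k k a.

Definition tau_closed (P : C -> Prop) : Prop :=
  forall (s : tau) (x : 'I_(ar s) -> C), (forall j, P (x j)) -> P (sig x).

Definition q_closed (P : C -> Prop) : Prop :=
  forall n x (y : 'I_n -> C), P x -> (forall i, P (y i)) -> P (@q n x y).

Definition is_subalgebra (P : C -> Prop) : Prop :=
  tau_closed P /\ q_closed P /\ (forall i, 1 <= i -> P (e i)).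

End CloneAlg.

(* Main.v *)
Require Import Defs.
From mathcomp Require Import all_boot.
From Stdlib Require Import Classical FunctionalExtensionality.
Set Implicit Arguments. Unset Strict Implicit.

Section Proofs.
Variables (tau : Type) (ar : tau -> nat) (C : Type).
Variable sig : forall s : tau, ('I_(ar s) -> C) -> C.
Variable q : forall n : nat, C -> ('I_n -> C) -> C.
Variable e : nat -> C.
Hypothesis HC : is_clone_alg sig q e.

Local Notation qn := (Defs.qn q).

Lemma qn_ext N a (y z : nat -> C) :
  (forall i, 0 < i <= N -> y i = z i) -> qn N a y = qn N a z.
Proof.
move=> H; rewrite /qn /Defs.qn; f_equal; apply: functional_extensionality => i.
by apply: H; rewrite /= ltn_ord.
Qed.

Lemma lift_lem k N x y : k <= N ->
  qn k x y = qn N x (fun i => if i <= k then y i else e i).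
Proof.
case: HC => _ [_ [_ [C4 _]]].
rewrite leq_eqVlt => /orP [/eqP <-|lt]; last by apply: C4.
by apply: qn_ext => i /andP [_ ->].
Qed.

Definition gN (n : nat) : nat -> C := fun i => if i < n then e i else e n.+1.

Lemma indepE a n : independent q e a n <-> qn n a (gN n) = a.
Proof. by []. Qed.

Lemma single a j N (y z : nat -> C) : independent q e a j -> 0 < j <= N ->
  (forall i, 0 < i <= N -> i != j -> y i = z i) -> qn N a y = qn N a z.
Proof.
case: HC => C1 [C2 [_ [_ [C5 _]]]].
move=> /indepE Hi /andP [j0 jN] Hyz.
have Ha : a = qn N a (fun i => if i == j then e j.+1 else e i).
  rewrite -{1}Hi (@lift_lem j N a (gN j) jN); apply: qn_ext => i /andP [i0 iN].
  rewrite /gN; case: ltngtP => //= [ij|ij|->]; try by rewrite ltnW.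

have key : forall w : nat -> C, qn N a w =
   qn N a (fun i => if i == j then (if j < N then w j.+1 else e j.+1) else w i).
  move=> w; rewrite {1}Ha C5.
  apply: qn_ext => i /andP [i0 iN].
  case: eqP => [_|_].
    case: ltnP => jN'; first by apply: C1; rewrite jN'.
    by apply: C2.
  by apply: C1; rewrite i0 iN.
rewrite key [in RHS]key; apply: qn_ext => i /andP [i0 iN].
case: eqP => [_|/eqP ne]; last by apply: Hyz; rewrite ?i0 ?iN.
case: ltnP => // jN'; apply: Hyz; first by rewrite jN'.
by rewrite neq_ltn ltnSn orbT.
Qed.

Lemma gamma_indep a k n : gamma_le q e a k -> k < n -> independent q e a n.
Proof. by move=> H kn; apply: NNPP; apply: H. Qed.

Lemma step_agree (y z : nat -> C) m i : i != m.+1 ->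
  (if i <= m then z i else y i) = (if i <= m.+1 then z i else y i).
Proof.
move=> ne; case: (ltngtP i m.+1) ne => [lt _|gt _|-> ]; last by [].
  by rewrite ltnS in lt; rewrite lt ?(leqW lt).
by rewrite leqNgt (ltnW gt).
Qed.

Lemma multi a k N (y z : nat -> C) : gamma_le q e a k ->
  (forall i, 0 < i <= N -> i <= k -> y i = z i) -> qn N a y = qn N a z.
Proof.
move=> Ha Hyz.
suff H : forall m, qn N a y = qn N a (fun i => if i <= m then z i else y i).
  rewrite (H N); apply: qn_ext => i /andP [_ ->] //.
elim=> [|m IH].
  by apply: qn_ext => i /andP [i0 _]; rewrite leqNgt i0.
rewrite IH.
have [mN|Nm] := ltnP m N; last first.
  apply: qn_ext => i /andP [i0 iN]; rewrite (leq_trans iN Nm).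
  by rewrite (leq_trans iN (leqW Nm)).
have [mk|km] := ltnP m k.
  apply: qn_ext => i /andP [i0 iN].
  case: (i =P m.+1) => [->|/eqP ne]; last by apply: step_agree.
  rewrite ltnn leqnn; apply: Hyz => //; by rewrite mN.
have Hi := @gamma_indep a k m.+1 Ha km.
apply: (@single a m.+1 N) => //.
by move=> i _ ne; apply: step_agree.
Qed.

Lemma fi0 a N y : gamma_le q e a 0 -> qn N a y = a.
Proof.
case: HC => _ [_ [C3 _]] Ha.
rewrite -{2}(C3 N a); apply: (@multi a 0 N) => //.
by move=> i /andP [i0 _]; rewrite leqNgt i0.
Qed.

Definition ext n (b : 'I_n -> C) : nat -> C := fun i =>
  match i with 0 => e 0 | j.+1 => if insub j is Some o then b o else e i end.

Lemma extE n (a : C) (b : 'I_n -> C) : @q n a b = qn n a (ext b).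
Proof.
rewrite /qn /Defs.qn /ext; f_equal; apply: functional_extensionality => i.
by rewrite valK.
Qed.

Lemma fik_mono k k' a : k <= k' -> gamma_le q e a k -> gamma_le q e a k'.
Proof. by move=> kk H n kn; apply: H; apply: leq_ltn_trans kn. Qed.

Lemma tau_cl k : tau_closed sig (Fi_k q e k).
Proof.
case: HC => _ [_ [_ [_ [_ C6]]]].
move=> s x Hx n kn D; apply: D; apply/indepE.
rewrite C6; congr (sig _); apply: functional_extensionality => j.
apply/indepE; exact: (gamma_indep (Hx j) kn).
Qed.

Lemma e_in k i : 0 < i <= k -> Fi_k q e k (e i).
Proof.
case: HC => C1 _ /andP [i0 ik] n kn D; apply: D; apply/indepE.
have ilt : i < n by apply: leq_ltn_trans kn.
by rewrite C1 /gN ?ilt // i0 ltnW.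
Qed.

Lemma ext_in (P : C -> Prop) n (y : 'I_n -> C) i :
  (forall o, P (y o)) -> 0 < i <= n -> P (ext y i).
Proof.
case: i => [//|i] Hy /andP [_ iN] /=.
case: insubP => [o _ _ //|]; by rewrite iN.
Qed.

Lemma fix_G k n N b : n <= N -> k < n -> Fi_k q e k b ->
  qn N b (fun i => if i <= n then gN n i else e i) = b.
Proof.
move=> nN kn Hb; rewrite -(@lift_lem n N b (gN n) nN).
apply/indepE; exact: (gamma_indep Hb kn).
Qed.

Lemma q_cl k : q_closed q (Fi_k q e k).
Proof.
case: HC => _ [_ [_ [_ [C5 _]]]].
move=> m x y Hx Hy n kn D; apply: D; apply/indepE.
rewrite extE.
rewrite (@lift_lem m (maxn m n) x (ext y) (leq_maxl m n)).
rewrite (@lift_lem n (maxn m n) _ (gN n) (leq_maxr m n)) C5.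
apply: (@multi x k) => // i /andP [i0 iN] ik.
apply: (@fix_G k n) => //; first exact: leq_maxr.
case: ifP => im; last by apply: e_in; rewrite i0.
by apply: (@ext_in (Fi_k q e k)) => //; rewrite i0.
Qed.

Lemma fin_bound m (P : 'I_m -> nat -> Prop) :
  (forall j k k', k <= k' -> P j k -> P j k') -> (forall j, exists k, P j k) ->
  exists K, forall j, P j K.
Proof.
move=> Pm Pe.
suff H : forall l, l <= m -> exists K, forall j : 'I_m, j < l -> P j K.
  by have [K HK] := H m (leqnn m); exists K => j; apply: HK.
elim=> [|l IH] lm; first by exists 0.
have [K HK] := IH (ltnW lm).
have [k Hk] := Pe (Ordinal lm).
exists (maxn K k) => j; rewrite ltnS leq_eqVlt => /orP [/eqP jl|jl].
  have -> : j = Ordinal lm by apply: val_inj.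
  by apply: (Pm _ k) => //; apply: leq_maxr.
by apply: (Pm _ K); [apply: leq_maxl | apply: HK].
Qed.

End Proofs.

Theorem proposition4p9 (tau : Type) (ar : tau -> nat) (C : Type)
  (sig : forall s : tau, ('I_(ar s) -> C) -> C)
  (q : forall n : nat, C -> ('I_n -> C) -> C) (e : nat -> C)
  (HC : is_clone_alg sig q e) :
  (* (i) *)
  is_subalgebra sig q e (Fi q e) /\
  (* (ii) *)
  (forall k, tau_closed sig (Fi_k q e k) /\ q_closed q (Fi_k q e k) /\
             (forall i, 1 <= i <= k -> Fi_k q e k (e i))) /\
  (* (iii) *)
  (forall a n (b : 'I_n -> C), Fi_k q e 0 a -> q n a b = a) /\
  (* (iv) *)
  (forall a n (b : 'I_n -> C), Fi q e a -> gamma_le q e a n ->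
     (forall i, Fi_k q e 0 (b i)) -> Fi_k q e 0 (q n a b)).
Proof.
have C5 := HC.2.2.2.2.1.
split; last split; last split.
- split; last split.
  + move=> s x Hx.
    have [K HK] := @fin_bound (ar s) (fun j k => Fi_k q e k (x j))
       (fun j k k' kk => @fik_mono C q e k k' (x j) kk) Hx.
    by exists K; apply: (tau_cl HC).
  + move=> m x y [kx Hx] Hy.
    have [K HK] := @fin_bound m (fun j k => Fi_k q e k (y j))
       (fun j k k' kk => @fik_mono C q e k k' (y j) kk) Hy.
    exists (maxn kx K); apply: (q_cl HC).
      by apply: (@fik_mono C q e kx _ _ (leq_maxl kx K)).
    by move=> i; apply: (@fik_mono C q e K _ _ (leq_maxr kx K)) (HK i).
  + by move=> i i1; exists i; apply: (e_in HC); rewrite i1 leqnn.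
- move=> k; split; first exact: (tau_cl HC).
  by split; [exact: (q_cl HC) | move=> i; apply: (e_in HC)].
- by move=> a n b Ha; rewrite (@extE C q e); apply: (fi0 HC).
- move=> a n b _ Ha Hb m m0 D; apply: D; apply/indepE.
  rewrite (@extE C q e).
  rewrite (@lift_lem _ _ _ _ _ _ HC n (maxn n m) a (ext e b) (leq_maxl n m)).
  rewrite (@lift_lem _ _ _ _ _ _ HC m (maxn n m) _ (gN e m) (leq_maxr n m)) C5.
  apply: (@multi _ _ _ _ _ _ HC a n) => // i /andP [i0 iN] ik.
  rewrite ik; apply: (fi0 HC).
  by apply: (@ext_in C e (Fi_k q e 0)) => //; rewrite i0.
Qed.
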